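(* Let $\mathsf{A}_e,\mathsf{A}_h\subset GL_2(\mathbb{R})$ be such that (1) $\mathsf{A}_h$ is nonempty, compact, and has a strongly invariant multicone $\mathcal{C}$, (2) $\mathsf{A}_e$ is strongly conformal and $A\mathcal{C}=\mathcal{C}$ for all $A\in\mathsf{A}_e$. Then the semigroup $\mathcal{S}(\mathsf{A}_e\cup\mathsf{A}_h)$ generated by $\mathsf{A}_e\cup\mathsf{A}_h$ is almost multiplicative.
   Context: $\|\cdot\|$ is the operator norm. A semigroup $\mathcal{S}\subset GL_2(\mathbb{R})$ is almost multiplicative if there is $\kappa>0$ with $\|AB\|\ge\kappa\|A\|\|B\|$ for all $A,B\in\mathcal{S}$. A set is strongly conformal if there is a single invertible $M$ with $|\det A|^{-1/2}MAM^{-1}\in O(2)$ for all $A$ in the set. $\mathbb{RP}^1$ is the real projective line; a multicone is a proper subset of $\mathbb{RP}^1$ that is a finite union of closed projective intervals; it is strongly invariant for a set $\mathsf{B}$ if $A\mathcal{C}\subset\mathcal{C}^o$ (interior) for all $A\in\mathsf{B}$. *)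

(* Defs.v *)
From HB Require Import structures.
From mathcomp Require Import all_boot all_order all_algebra.
From mathcomp Require Import all_classical all_reals all_analysis.
Set Implicit Arguments. Unset Strict Implicit. Unset Printing Implicit Defensive.
Import Order.TTheory GRing.Theory Num.Theory.
Import numFieldNormedType.Exports.
Local Open Scope classical_set_scope.
Local Open Scope ring_scope.

Section Defs.
Variable R : realType.

Definition eucl (v : 'cV[R]_2) : R := Num.sqrt (v 0 0 ^+ 2 + v 1 0 ^+ 2).

Definition opnorm (A : 'M[R]_2) : R :=
  sup [set eucl (A *m v) | v in [set v : 'cV[R]_2 | eucl v = 1]].

Definition inGL2 (A : 'M[R]_2) : Prop := A \in unitmx.

Inductive gen_semigroup (S : set 'M[R]_2) : 'M[R]_2 -> Prop :=
| gen_base A : S A -> gen_semigroup S A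
| gen_mul A B : gen_semigroup S A -> gen_semigroup S B -> gen_semigroup S (A *m B).

Definition almost_multiplicative (S : set 'M[R]_2) : Prop :=
  exists kappa : R, 0 < kappa /\
    forall A B, S A -> S B -> kappa * opnorm A * opnorm B <= opnorm (A *m B).

Definition orthogonal2 (B : 'M[R]_2) : Prop := B^T *m B = 1%:M.

Definition strongly_conformal (S : set 'M[R]_2) : Prop :=
  exists M : 'M[R]_2, M \in unitmx /\
    forall A, S A ->
      orthogonal2 ((Num.sqrt `|\det A|)^-1 *: (M *m A *m invmx M)).

(* Subsets of RP^1 are represented by their cones in R^2 \ {0}: a set of
   nonzero vectors, stable under nonzero scalings. *)
Definition dir (t : R) : 'cV[R]_2 :=
  \col_i (if i == 0 then cos t else sin t).

(* the closed projective interval of directions with angle in [a, b],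
   with a <= b < a + pi (so it is a proper closed arc of RP^1) *)
Definition proj_interval (a b : R) : set 'cV[R]_2 :=
  [set v | exists t s, a <= t <= b /\ s != 0 /\ v = s *: dir t].

Definition is_closed_proj_interval (I : set 'cV[R]_2) : Prop :=
  exists a b, a <= b /\ b < a + pi /\ I = proj_interval a b.

Definition RP1 : set 'cV[R]_2 := [set v | v != 0].

Definition multicone (C : set 'cV[R]_2) : Prop :=
  (exists Is : seq (set 'cV[R]_2),
      (forall I, I \in Is -> is_closed_proj_interval I) /\
      C = \bigcup_(I in [set I | I \in Is]) I) /\
  C !=set0 /\ C <> RP1.

Definition image_mx (A : 'M[R]_2) (C : set 'cV[R]_2) : set 'cV[R]_2 :=
  [set A *m v | v in C].

(* interior in RP^1 of the set of directions C, read on cones (the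
   projection R^2\{0} -> RP^1 is open, so this is the preimage of the
   interior in RP^1) *)
Definition strongly_invariant (C : set 'cV[R]_2) (S : set 'M[R]_2) : Prop :=
  forall A, S A -> image_mx A C `<=` interior C.

End Defs.

(* Main.v *)
Require Import Defs.
From HB Require Import structures.
From mathcomp Require Import all_boot all_order all_algebra.
From mathcomp Require Import all_classical all_reals all_analysis.
From mathcomp Require Import ring lra.
Import Order.TTheory GRing.Theory Num.Theory.
Import numFieldNormedType.Exports.
Local Open Scope classical_set_scope.
Local Open Scope ring_scope.
Section S.
Variable R : realType.
Local Notation V := 'cV[R]_2.
Local Notation M2 := 'M[R]_2.
Lemma sum2 (F : 'I_2 -> R) : \sum_(i < 2) F i = F 0 + F 1.
Proof.
rewrite big_ord_recl big_ord_recl big_ord0 addr0.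
by congr (F _ + F _); apply: val_inj.
Qed.
Lemma det2 (A : M2) : \det A = A 0 0 * A 1 1 - A 0 1 * A 1 0.
Proof.
rewrite (expand_det_row _ 0) sum2 /cofactor.
rewrite !(expand_det_row _ 0) !big_ord1 /cofactor !det_mx00 !mxE /=.
have -> : lift 0 (0 : 'I_1) = 1 :> 'I_2 by apply: val_inj.
have -> : lift 1 (0 : 'I_1) = 0 :> 'I_2 by apply: val_inj.
rewrite /= expr0 expr1; ring.
Qed.
Lemma mulmx2E (A : M2) (v : V) i j : (A *m v) i j = A i 0 * v 0 j + A i 1 * v 1 j.
Proof. by rewrite mxE sum2. Qed.
Lemma vec2_eq (x y : V) : x 0 0 = y 0 0 -> x 1 0 = y 1 0 -> x = y.
Proof.
move=> h0 h1; apply/matrixP => i j; rewrite [j]ord1.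
case: i => [[|[|//]]] Hi.
  by have -> : Ordinal Hi = 0 by apply: val_inj.
by have -> : Ordinal Hi = 1 by apply: val_inj.
Qed.

Definition q (v : V) : R := v 0 0 ^+ 2 + v 1 0 ^+ 2.
Definition cr (a b : V) : R := a 0 0 * b 1 0 - a 1 0 * b 0 0.
Definition dt (a b : V) : R := a 0 0 * b 0 0 + a 1 0 * b 1 0.
Definition F2 (A : M2) : R := A 0 0 ^+ 2 + A 0 1 ^+ 2 + A 1 0 ^+ 2 + A 1 1 ^+ 2.

Lemma q_ge0 v : 0 <= q v.
Proof. by rewrite /q addr_ge0 // sqr_ge0. Qed.
Lemma F2_ge0 A : 0 <= F2 A.
Proof. by rewrite /F2 !addr_ge0 // sqr_ge0. Qed.
Lemma q_eq0 v : q v = 0 -> v = 0.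
Proof.
move=> h; have := sqr_ge0 (v 0 0); have := sqr_ge0 (v 1 0); rewrite /q in h => g1 g0.
have h0 : v 0 0 = 0 by apply/eqP; rewrite -sqrf_eq0; apply/eqP; lra.
have h1 : v 1 0 = 0 by apply/eqP; rewrite -sqrf_eq0; apply/eqP; lra.
by apply: vec2_eq; rewrite ?mxE.
Qed.
Lemma q_gt0 v : v != 0 -> 0 < q v.
Proof. by move=> hv; rewrite lt_neqAle q_ge0 andbT; apply: contra hv => /eqP/esym/q_eq0 ->. Qed.
Lemma qZ k v : q (k *: v) = k ^+ 2 * q v.
Proof. rewrite /q !mxE; ring. Qed.
Lemma qD v w : q (v + w) = q v + q w + 2 * dt v w.
Proof. rewrite /q /dt !mxE; ring. Qed.
Lemma qB v w : q (v - w) = q v + q w - 2 * dt v w.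
Proof. rewrite /q /dt !mxE; ring. Qed.
Lemma lagrange a b : q a * q b = cr a b ^+ 2 + dt a b ^+ 2.
Proof. rewrite /q /cr /dt; ring. Qed.
Lemma cr_le a b : cr a b ^+ 2 <= q a * q b.
Proof. by rewrite lagrange lerDl sqr_ge0. Qed.
Lemma q_mul_le (A : M2) v : q (A *m v) <= F2 A * q v.
Proof.
rewrite /q /F2 !mulmx2E.
have -> : (A 0 0 ^+ 2 + A 0 1 ^+ 2 + A 1 0 ^+ 2 + A 1 1 ^+ 2) * (v 0 0 ^+ 2 + v 1 0 ^+ 2)
  = (A 0 0 * v 0 0 + A 0 1 * v 1 0) ^+ 2 + (A 1 0 * v 0 0 + A 1 1 * v 1 0) ^+ 2
    + ((A 0 0 * v 1 0 - A 0 1 * v 0 0) ^+ 2 + (A 1 0 * v 1 0 - A 1 1 * v 0 0) ^+ 2) by ring.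
by rewrite lerDl addr_ge0 // sqr_ge0.
Qed.
Lemma q_mul_ge (A : M2) v : (\det A) ^+ 2 * q v <= F2 A * q (A *m v).
Proof.
rewrite det2 /q /F2 !mulmx2E.
set a := A 0 0; set b := A 0 1; set c := A 1 0; set d := A 1 1.
set x := v 0 0; set y := v 1 0.
set y0 := a * x + b * y; set y1 := c * x + d * y.
have -> : (a * d - b * c) ^+ 2 * (x ^+ 2 + y ^+ 2) = (d * y0 - b * y1) ^+ 2 + (- c * y0 + a * y1) ^+ 2
  by rewrite /y0 /y1; ring.
have -> : (a ^+ 2 + b ^+ 2 + c ^+ 2 + d ^+ 2) * (y0 ^+ 2 + y1 ^+ 2) =
  (d * y0 - b * y1) ^+ 2 + (- c * y0 + a * y1) ^+ 2 + ((d * y1 + b * y0) ^+ 2 + (c * y1 + a * y0) ^+ 2) by ring.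
by rewrite lerDl addr_ge0 // sqr_ge0.
Qed.
Definition mkv (x y : R) : V := \col_i (if i == 0 then x else y).
Lemma mkv0 x y : mkv x y 0 0 = x. Proof. by rewrite mxE. Qed.
Lemma mkv1 x y : mkv x y 1 0 = y. Proof. by rewrite mxE. Qed.

Lemma core (C : set V) (p0 : V) (rho eta : R) (Y : M2) (w : V) :
  (forall x, C x -> x != 0) ->
  q p0 = 1 -> 0 < rho -> rho <= 1 ->
  (forall x, C x -> rho * q x <= cr x p0 ^+ 2) ->
  (forall x, C x -> C (Y *m x)) ->
  0 < eta -> eta <= 1 ->
  (forall x, q (x - w) <= eta ^+ 2 * q w -> C x) ->
  forall u, (eta * rho / 3) ^+ 2 * q (Y *m u) * q w <= q (Y *m w) * q u.
Proof.
move=> C0 hp0 r0 r1 hcomp hY e0 e1 hm u.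
rewrite leNgt; apply/negP => hlt.
set a := Y *m w in hlt *; set b := Y *m u in hlt *.
set eps := eta * rho / 3 in hlt.
have qb : 0 < q b.
  rewrite lt_neqAle q_ge0 andbT; apply/eqP => hb; move: hlt; rewrite -hb mulr0 mul0r.
  by rewrite ltNge mulr_ge0 // q_ge0.
set s := if 0 <= cr b p0 * dt b p0 then rho / 2 else - (rho / 2).
have s2 : s ^+ 2 = rho ^+ 2 / 4 by rewrite /s; case: ifP => _; rewrite ?sqrrN; field.
set z := mkv (p0 0 0 - s * p0 1 0) (p0 1 0 + s * p0 0 0).
have crz v : cr v z = cr v p0 + s * dt v p0.
  by rewrite /cr /dt /z mkv0 mkv1; ring.
have hl v : q v = cr v p0 ^+ 2 + dt v p0 ^+ 2 by rewrite -lagrange hp0 mulr1.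
have hcrb : s ^+ 2 * q b <= cr b z ^+ 2.
  have hs : 0 <= s * (cr b p0 * dt b p0).
    by rewrite /s; case: ifP => h; nra.
  have hs1 : s ^+ 2 <= 1 by rewrite s2; nra.
  rewrite crz hl.
  have := sqr_ge0 (cr b p0); have := sqr_ge0 (dt b p0); nra.
have qz : q z = 1 + s ^+ 2.
  rewrite /q /z mkv0 mkv1; move: hp0; rewrite /q => hp0.
  have -> : (p0 0 0 - s * p0 1 0) ^+ 2 + (p0 1 0 + s * p0 0 0) ^+ 2 =
     (p0 0 0 ^+ 2 + p0 1 0 ^+ 2) * (1 + s ^+ 2) by ring.
  by rewrite hp0 mul1r.
have crb0 : cr b z != 0.
  apply/eqP => h; move: hcrb; rewrite h expr0n /= s2.
  have : 0 < rho ^+ 2 / 4 * q b by rewrite mulr_gt0 // divr_gt0 // exprn_gt0.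
  lra.
set tau := - cr a z / cr b z.
have htau : tau * cr b z = - cr a z by rewrite /tau mulrVK ?unitfE.
set x := w + tau *: u.
have hx : q (x - w) <= eta ^+ 2 * q w.
  have -> : x - w = tau *: u by rewrite /x addrC addKr.
  rewrite qZ.
  have hca : cr a z ^+ 2 <= 2 * q a.
    apply: (le_trans (cr_le a z)); rewrite qz mulrC; apply: ler_wpM2r; first exact: q_ge0.
    by rewrite s2; nra.
  have hqu := q_ge0 u; have hqw := q_ge0 w; have hqa := q_ge0 a.
  have h1 : tau ^+ 2 * q u * cr b z ^+ 2 <= 2 * q a * q u.
    rewrite mulrAC -exprMn htau sqrrN; apply: ler_wpM2r => //.
  have h2 : tau ^+ 2 * q u * (rho ^+ 2 / 4 * q b) <= tau ^+ 2 * q u * cr b z ^+ 2.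
    apply: ler_wpM2l; first by rewrite mulr_ge0 // sqr_ge0.
    by rewrite -s2.
  have h3 : 2 * q a * q u < 2 * (eps ^+ 2 * q b * q w) by rewrite -mulrA ltr_pM2l.
  have h4 : tau ^+ 2 * q u * (rho ^+ 2 / 4 * q b) < 2 * (eps ^+ 2 * q b * q w) by lra.
  have h5 : tau ^+ 2 * q u * (rho ^+ 2 / 4) < 2 * (eps ^+ 2 * q w).
    have ee1 : tau^+2*q u*(rho^+2/4) * q b = tau ^+ 2 * q u * (rho ^+ 2 / 4 * q b) by ring.
    have ee2 : 2*(eps^+2*q w) * q b = 2 * (eps ^+ 2 * q b * q w) by ring.
    by rewrite -(ltr_pM2r qb) ee1 ee2.
  have h6 : 2 * (eps ^+ 2 * q w) = (rho ^+ 2 / 4) * (8 / 9 * eta ^+ 2 * q w).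
    by rewrite /eps; field.
  rewrite h6 mulrC ltr_pM2l in h5; last by rewrite divr_gt0 // exprn_gt0.
  have : 8 / 9 * eta ^+ 2 * q w <= eta ^+ 2 * q w.
    have := sqr_ge0 eta; nra.
  lra.
have Cy := hY _ (hm _ hx).
set y := Y *m x in Cy.
have yE : y = a + tau *: b by rewrite /y /x mulmxDr scalemxAr.
have cryz : cr y z = 0.
  have -> : cr y z = cr a z + tau * cr b z by rewrite yE /cr !mxE; ring.
  by rewrite htau addrN.
have hy := hcomp _ Cy.
have y0 := C0 _ Cy.
move: cryz; rewrite crz => cryz.
have hCy : cr y p0 = - (s * dt y p0) by lra.
have qy := @q_gt0 y y0.
rewrite hl hCy sqrrN exprMn s2 in hy qy.
have hd := sqr_ge0 (dt y p0).
have hr : 0 < rho - (1 - rho) * (rho ^+ 2 / 4) by nra.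
have : dt y p0 ^+ 2 * (rho - (1 - rho) * (rho ^+ 2 / 4)) <= 0 by nra.
move=> hneg.
have hd0 : dt y p0 ^+ 2 = 0.
  apply/eqP; rewrite eq_le hd andbT.
  by rewrite -(pmulr_lle0 _ hr).
move: qy; rewrite hd0 mulr0 add0r ltxx //.
Qed.
Lemma euclE (v : V) : eucl v = Num.sqrt (q v). Proof. by []. Qed.
Lemma eucl_sq (v : V) : eucl v ^+ 2 = q v. Proof. by rewrite euclE sqr_sqrtr // q_ge0. Qed.
Lemma eucl_ge0 (v : V) : 0 <= eucl v. Proof. exact: sqrtr_ge0. Qed.
Lemma eucl1 {v : V} : eucl v = 1 -> q v = 1. Proof. by move=> h; rewrite -eucl_sq h expr1n. Qed.
Lemma q1_eucl (v : V) : q v = 1 -> eucl v = 1. Proof. by move=> h; rewrite euclE h sqrtr1. Qed.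

Definition e1 : V := mkv 1 0.
Lemma e1_unit : eucl e1 = 1.
Proof. by apply: q1_eucl; rewrite /q /e1 mkv0 mkv1 expr1n expr0n addr0. Qed.

Lemma opnorm_has_sup (A : M2) :
  has_sup [set eucl (A *m v) | v in [set v : V | eucl v = 1]].
Proof.
split; first by exists (eucl (A *m e1)), e1 => //; exact: e1_unit.
exists (Num.sqrt (F2 A)) => _ [v hv <-].
rewrite euclE ler_sqrt ?F2_ge0 //.
by apply: (le_trans (q_mul_le A v)); rewrite (eucl1 hv) mulr1.
Qed.

Lemma opnorm_ub (A : M2) (v : V) : eucl v = 1 -> eucl (A *m v) <= opnorm A.
Proof. by move=> hv; apply: (sup_upper_bound (opnorm_has_sup A)); exists v. Qed.

Lemma opnorm_le (A : M2) B : (forall v, eucl v = 1 -> eucl (A *m v) <= B) -> opnorm A <= B.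
Proof.
move=> h; apply: ge_sup; first by case: (opnorm_has_sup A).
by move=> _ [v hv <-]; apply: h.
Qed.

Lemma opnorm_ge0 (A : M2) : 0 <= opnorm A.
Proof. apply: le_trans (opnorm_ub A e1 e1_unit); exact: eucl_ge0. Qed.

Lemma eucl_gt0 (v : V) : v != 0 -> 0 < eucl v.
Proof. by move=> hv; rewrite euclE sqrtr_gt0 q_gt0. Qed.

Lemma opnorm_lower (A : M2) (v : V) (d : R) : 0 < d -> v != 0 ->
  (forall u, d * q (A *m u) * q v <= q (A *m v) * q u) ->
  Num.sqrt d * opnorm A * eucl v <= eucl (A *m v).
Proof.
move=> d0 v0 h.
have ev := eucl_gt0 _ v0.
have sd : 0 < Num.sqrt d by rewrite sqrtr_gt0.
have key : opnorm A <= eucl (A *m v) / (Num.sqrt d * eucl v).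
  apply: opnorm_le => u hu.
  rewrite ler_pdivlMr ?mulr_gt0 // !euclE.
  have -> : Num.sqrt (q (A *m u)) * (Num.sqrt d * Num.sqrt (q v)) =
            Num.sqrt (q (A *m u) * (d * q v)).
    by rewrite sqrtrM ?q_ge0 // sqrtrM ?ltW.
  rewrite ler_sqrt ?q_ge0 //.
  by have := h u; rewrite (eucl1 hu) mulr1 mulrCA mulrA.
by move: key; rewrite ler_pdivlMr ?mulr_gt0 // mulrCA mulrA.
Qed.
Lemma dir0 (t : R) : dir t 0 0 = cos t. Proof. by rewrite mxE. Qed.
Lemma dir1 (t : R) : dir t 1 0 = sin t. Proof. by rewrite mxE. Qed.

Lemma fcont i (p : M2 * R) :
  {for p, continuous (fun p : M2 * R => (p.1 *m dir p.2) i 0)}.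
Proof.
have e : (fun p : M2 * R => (p.1 *m dir p.2) i 0) =
         (fun p => p.1 i 0 * cos p.2 + p.1 i 1 * sin p.2).
  by apply: funext => r; rewrite mulmx2E dir0 dir1.
rewrite e.
have cf j : {for p, continuous (fun p : M2 * R => p.1 i j)}.
  apply: (@continuous_comp _ _ _ fst (fun H : M2 => H i j)); first exact: cvg_fst.
  exact: coord_continuous.
have cc : {for p, continuous (fun p : M2 * R => cos p.2)}.
  apply: (@continuous_comp _ _ _ snd (@cos R)); first exact: cvg_snd.
  exact: continuous_cos.
have cs : {for p, continuous (fun p : M2 * R => sin p.2)}.
  apply: (@continuous_comp _ _ _ snd (@sin R)); first exact: cvg_snd.
  exact: continuous_sin.
exact: (continuousD (continuousM (cf 0) cc) (continuousM (cf 1) cs)).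
Qed.

Lemma margin_int (Ah : set M2) (C : set V) a b :
  compact Ah -> (forall H t, Ah H -> a <= t <= b -> nbhs (H *m dir t) C) ->
  \forall e \near 0^'+, forall H t, Ah H -> a <= t <= b ->
     forall x : V, (forall i, `|x i 0 - (H *m dir t) i 0| < e) -> C x.
Proof.
move=> cAh hint.
have cpt := compact_setX cAh (@segment_compact R a b).
move/compact_near_coveringP: cpt => nc.
have := nc R (0^'+) (fun e p => forall x : V, (forall i, `|x i 0 - (p.1 *m dir p.2) i 0| < e) -> C x) _.
have Hloc : forall p, (Ah `*` `[a, b]) p ->
    \forall p' \near p & e \near 0^'+, forall x : V,
      (forall i, `|x i 0 - (p'.1 *m dir p'.2) i 0| < e) -> C x.
  move=> [H t] [/= hH ht].
  have ht' : a <= t <= b by move: ht; rewrite /= in_itv.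
  have /nbhs_ballP [e0 e0pos he0] := hint H t hH ht'.
  have e2 : 0 < e0 / 2 by rewrite divr_gt0.
  have n0 := cvgr_dist_lt _ _ (fcont 0 (H, t)) _ e2.
  have n1 := cvgr_dist_lt _ _ (fcont 1 (H, t)) _ e2.
  exists ((fun p' : M2 * R => `|(H *m dir t) 0 0 - (p'.1 *m dir p'.2) 0 0| < e0 / 2) `&`
          (fun p' : M2 * R => `|(H *m dir t) 1 0 - (p'.1 *m dir p'.2) 1 0| < e0 / 2),
          (fun e => 0 < e) `&` (fun e => e < e0 / 2)).
    split => /=; first exact: filterI (n0 _) (n1 _).
    exact: filterI (nbhs_right_gt 0) (nbhs_right_lt e2).
  move=> [p' e] /= [[h0 h1] [ep elt]] x hx.
  apply: he0; split => // i j; rewrite [j]ord1 /ball /=.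
  have hxi := hx i.
  have hi : `|(H *m dir t) i 0 - (p'.1 *m dir p'.2) i 0| < e0 / 2.
    by case: i {hxi} => [[|[|//]]] Hi; [have -> : Ordinal Hi = 0 by apply: val_inj
                                        |have -> : Ordinal Hi = 1 by apply: val_inj].
  have t1 := ler_distD ((p'.1 *m dir p'.2) i 0) ((H *m dir t) i 0) (x i 0).
  rewrite (distrC ((p'.1 *m dir p'.2) i 0) (x i 0)) in t1.
  have key : `|(H *m dir t) i 0 - x i 0| < e0 by lra.
  by first [exact: key | rewrite distrC].
move=> /(_ _ Hloc); apply: filterS => e he H t hH ht x hx.
apply: (he (H, t)) => //; split => //=; rewrite in_itv /=; exact: ht.
Qed.
Lemma dir_q (t : R) : q (dir t) = 1.
Proof. by rewrite /q dir0 dir1 cos2Dsin2. Qed.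

Lemma near_seq {T : Type} {U : eqType} (F : set_system T) {FF : Filter F}
  (s : seq U) (Q : T -> U -> Prop) :
  (forall i, i \in s -> \forall x \near F, Q x i) ->
  \forall x \near F, forall i, i \in s -> Q x i.
Proof.
elim: s => [|j s IH] h.
  by apply: filterE => x i; rewrite in_nil.
have hj := h j (mem_head j s).
have hs : \forall x \near F, forall i, i \in s -> Q x i.
  by apply: IH => i hi; apply: h; rewrite in_cons hi orbT.
apply: filterS (filterI hj hs) => x [hx1 hx2] i; rewrite in_cons => /orP [/eqP -> //|].
exact: hx2.
Qed.

Lemma pi_scale a b (y : V) mu : proj_interval a b y -> mu != 0 -> proj_interval a b (mu *: y).
Proof.
move=> [t [s [ht [s0 ->]]]] mu0; exists t, (mu * s); split => //; split.
  by rewrite mulf_neq0.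
by rewrite scalerA.
Qed.

Lemma pi_neq0 a b (y : V) : proj_interval a b y -> y != 0.
Proof.
move=> [t [s [ht [s0 ->]]]]; apply/eqP => h.
have := congr1 q h; rewrite qZ dir_q mulr1 /q !mxE expr0n /= addr0 => /eqP.
by rewrite sqrf_eq0; apply/negP.
Qed.

Lemma cr0_par {t : R} {p : V} : cr (dir t) p = 0 -> p = dt (dir t) p *: dir t.
Proof.
rewrite /cr /dt dir0 dir1 => h.
have c2 := cos2Dsin2 t.
apply: vec2_eq; rewrite !mxE /=.
  have -> : (cos t * p 0 0 + sin t * p 1 0) * cos t = p 0 0 * (cos t ^+ 2) + sin t * (cos t * p 1 0) by ring.
  have -> : cos t * p 1 0 = sin t * p 0 0 by lra.
  have -> : p 0 0 * cos t ^+ 2 + sin t * (sin t * p 0 0) = p 0 0 * (cos t ^+ 2 + sin t ^+ 2) by ring.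
  by rewrite c2 mulr1.
have -> : (cos t * p 0 0 + sin t * p 1 0) * sin t = cos t * (sin t * p 0 0) + p 1 0 * sin t ^+ 2 by ring.
have -> : sin t * p 0 0 = cos t * p 1 0 by lra.
have -> : cos t * (cos t * p 1 0) + p 1 0 * sin t ^+ 2 = p 1 0 * (cos t ^+ 2 + sin t ^+ 2) by ring.
by rewrite c2 mulr1.
Qed.

Lemma cr_cont (p : V) : continuous (fun t : R => cr (dir t) p ^+ 2).
Proof.
move=> t.
have e : (fun t : R => cr (dir t) p ^+ 2) =
   (fun t => (cos t * p 1 0 - sin t * p 0 0) * (cos t * p 1 0 - sin t * p 0 0)).
  by apply: funext => r; rewrite /cr dir0 dir1 expr2.
rewrite e.
have cc : {for t, continuous (fun t : R => cos t * p 1 0)}.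
  exact: (@continuousM R R (@cos R) (fun=> p 1 0) t (@continuous_cos R t) (@cst_continuous R R (p 1 0) t)).
have cs : {for t, continuous (fun t : R => sin t * p 0 0)}.
  exact: (@continuousM R R (@sin R) (fun=> p 0 0) t (@continuous_sin R t) (@cst_continuous R R (p 0 0) t)).
have cd := continuousD cc (continuousN cs).
exact: (continuousM cd cd).
Qed.
Lemma comp_int (C : set V) (p0 : V) a b :
  a <= b -> proj_interval a b `<=` C -> ~ C p0 -> p0 != 0 ->
  \forall r \near 0^'+, forall x, proj_interval a b x -> r * q x <= cr x p0 ^+ 2.
Proof.
move=> ab sub nC p00.
have [c hc hmin] := EVT_min ab (continuous_subspaceT (cr_cont p0)).
have pos : 0 < cr (dir c) p0 ^+ 2.
  rewrite lt_neqAle sqr_ge0 andbT eq_sym sqrf_eq0; apply/negP => /eqP h.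
  apply: nC; rewrite (cr0_par h); apply: sub.
  exists c, (dt (dir c) p0); split; first by move: hc; rewrite in_itv.
  split => //; apply/eqP => h0; move: (cr0_par h); rewrite h0 scale0r => h1.
  by move/eqP: p00; apply.
apply: filterS (nbhs_right_le pos) => r hr x [t [s [ht [s0 ->]]]].
rewrite qZ dir_q mulr1.
have -> : cr (s *: dir t) p0 = s * cr (dir t) p0 by rewrite /cr !mxE; ring.
rewrite exprMn mulrC ler_wpM2l ?sqr_ge0 //.
by apply: le_trans hr (hmin t _); rewrite in_itv.
Qed.

Section Multicone.
Variables (C : set V) (Is : seq (set V)).
Hypothesis hIs : forall I, I \in Is -> is_closed_proj_interval I.
Hypothesis CE : C = \bigcup_(I in [set I | I \in Is]) I.

Lemma C_inv x : C x <-> exists2 I, I \in Is & I x.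
Proof. by rewrite CE; split => [[I hI hx]|[I hI hx]]; exists I. Qed.

Lemma C_neq0 {x : V} : C x -> x != 0.
Proof.
move/C_inv => [I /hIs [a [b [_ [_ ->]]]]]; exact: pi_neq0.
Qed.

Lemma C_scale {x : V} {mu : R} : C x -> mu != 0 -> C (mu *: x).
Proof.
move/C_inv => [I hI hx] mu0; apply/C_inv; exists I => //.
move: (hIs _ hI) hx => [a [b [_ [_ ->]]]] hx; exact: pi_scale.
Qed.

Lemma I_sub I : I \in Is -> I `<=` C.
Proof. by move=> hI x hx; apply/C_inv; exists I. Qed.

Lemma complement : C <> @RP1 R ->
  exists p0 rho, [/\ q p0 = 1, 0 < rho, rho <= 1 &
                    forall x, C x -> rho * q x <= cr x p0 ^+ 2].
Proof.
move=> hne.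
have [p [hp0 hpC]] : exists p : V, p != 0 /\ ~ C p.
  case: (pselect (exists p : V, p != 0 /\ ~ C p)) => // hno; exfalso; apply: hne.
  apply/seteqP; split => x /=; first exact: C_neq0.
  rewrite /RP1 /= => hx; apply: contrapT => nC; apply: hno; by exists x.
have ep := eucl_gt0 _ hp0.
set p0 := (eucl p)^-1 *: p.
have qp0 : q p0 = 1.
  by rewrite qZ -eucl_sq exprVn mulVf // expf_neq0 // gt_eqF.
have p00 : p0 != 0 by apply/eqP => h; move: qp0; rewrite h /q !mxE expr0n /= addr0 => /eqP; rewrite eq_sym oner_eq0.
have nC0 : ~ C p0.
  move=> h; apply: hpC; have := C_scale h (lt0r_neq0 ep).
  by rewrite /p0 scalerA mulfV ?gt_eqF // scale1r.
have hn : \forall r \near 0^'+, forall I, I \in Is -> forall x, I x -> r * q x <= cr x p0 ^+ 2.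
  apply: near_seq => I hI.
  move: (hIs _ hI) => [a [b [ab [_ IE]]]]; rewrite IE.
  apply: (@comp_int C) => //; rewrite -IE; exact: (I_sub _ hI).
have hn2 := filterI hn (filterI (nbhs_right_gt (0:R)) (nbhs_right_le (@ltr01 R))).
have [r [hr [r0 r1]]] := filter_ex (hn2 _ _).
exists p0, r; split => // x /C_inv [I hI hx]; exact: hr I hI x hx.
Qed.
End Multicone.
Lemma ord2_cases (i : 'I_2) : i = 0 \/ i = 1.
Proof.
case: i => [[|[|//]]] Hi; [left|right]; exact: val_inj.
Qed.

Lemma q_entry (v : V) i : v i 0 ^+ 2 <= q v.
Proof.
have h0 := sqr_ge0 (v 0 0); have h1 := sqr_ge0 (v 1 0).
by case: (ord2_cases i) => ->; rewrite /q; lra.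
Qed.

Lemma entry_lt (v : V) e : 0 < e -> q v < e ^+ 2 -> forall i, `|v i 0| < e.
Proof.
move=> e0 hq i; have := le_lt_trans (q_entry v i) hq.
have hn : `|v i 0| ^+ 2 = v i 0 ^+ 2 by rewrite real_normK // num_real.
rewrite -hn => h.
have n0 := normr_ge0 (v i 0).
rewrite ltNge; apply/negP => h2.
nra.
Qed.

Lemma coord_cont i j : continuous (fun H : M2 => H i j).
Proof. exact: coord_continuous. Qed.

Lemma F2cont : continuous (@F2).
Proof.
move=> H.
have c i j : {for H, continuous (fun H : M2 => H i j ^+ 2)}.
  exact: (@continuousM R _ (fun H : M2 => H i j) (fun H : M2 => H i j) H (coord_cont i j H) (coord_cont i j H)).
exact: (continuousD (continuousD (continuousD (c 0 0) (c 0 1)) (c 1 0)) (c 1 1)).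
Qed.

Lemma det2cont : continuous (fun H : M2 => \det H ^+ 2).
Proof.
have -> : (fun H : M2 => \det H ^+ 2) = (fun H : M2 =>
   (H 0 0 * H 1 1 - H 0 1 * H 1 0) * (H 0 0 * H 1 1 - H 0 1 * H 1 0)).
  by apply: funext => H; rewrite det2 expr2.
move=> H.
have c i j : {for H, continuous (fun H : M2 => H i j)} by exact: coord_cont.
have p1 := @continuousM R _ _ _ H (c 0 0) (c 1 1).
have p2 := @continuousM R _ _ _ H (c 0 1) (c 1 0).
have d := continuousD p1 (continuousN p2).
exact: (continuousM d d).
Qed.

Lemma Ah_bounds (Ah : set M2) : Ah !=set0 -> compact Ah -> (forall H, Ah H -> H \in unitmx) ->
  exists Phi d0, [/\ 1 <= Phi, 0 < d0, d0 <= 1 &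
     forall H, Ah H -> F2 H <= Phi /\ d0 <= \det H ^+ 2].
Proof.
move=> ne cpt hu.
have [Hm hHm hmax] := compact_EVT_max ne cpt (continuous_subspaceT F2cont).
have [Hn hHn hmin] := compact_EVT_min ne cpt (continuous_subspaceT det2cont).
have dpos : 0 < \det Hn ^+ 2.
  have : \det Hn != 0 by rewrite -unitfE -unitmxE; apply: hu; rewrite -inE.
  by move=> h; rewrite lt_neqAle sqr_ge0 andbT eq_sym sqrf_eq0.
exists (Num.max 1 (F2 Hm)), (Num.min 1 (\det Hn ^+ 2)); split.
- by rewrite le_max lexx.
- by rewrite lt_min ltr01 dpos.
- by rewrite ge_min lexx.
move=> H hH; split.
  by rewrite le_max (hmax H) ?orbT // inE.
by rewrite ge_min (hmin H) ?orbT // inE.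
Qed.
Lemma entryB (u w : V) i : (u - w) i 0 = u i 0 - w i 0.
Proof. by rewrite !mxE. Qed.

Lemma margin (Ah : set M2) (C : set V) (Is : seq (set V)) (Phi : R) :
  (forall I, I \in Is -> is_closed_proj_interval I) ->
  C = \bigcup_(I in [set I | I \in Is]) I ->
  compact Ah -> strongly_invariant C Ah -> 1 <= Phi ->
  (forall H, Ah H -> F2 H <= Phi) ->
  exists eta, [/\ 0 < eta, eta <= 1 &
    forall H, Ah H -> forall k, C k -> forall x,
      q (x - H *m k) <= eta ^+ 2 * q (H *m k) -> C x].
Proof.
move=> hIs CE cpt hsi Phi1 hPhi.
have hn : \forall e \near 0^'+, forall I, I \in Is -> forall H, Ah H -> forall k, I k ->
    q k = 1 -> forall x : V, (forall i, `|x i 0 - (H *m k) i 0| < e) -> C x.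
  apply: near_seq => I hI.
  move: (hIs _ hI) => [a [b [ab [_ IE]]]].
  have hint : forall H t, Ah H -> a <= t <= b -> nbhs (H *m dir t) C.
    move=> H t hH ht; apply: (hsi H hH); exists (dir t) => //.
    apply: (@I_sub C Is CE I hI); rewrite IE; exists t, 1; split => //; split.
      exact: oner_neq0.
    by rewrite scale1r.
  apply: filterS (margin_int Ah C a b cpt hint) => e he H hH k; rewrite IE => -[t [s [ht [s0 ->]]]].
  rewrite qZ dir_q mulr1 => /eqP; rewrite sqrf_eq1 => /orP [] /eqP -> x hx.
    by apply: (he H t hH ht); move=> i; move: (hx i); rewrite scale1r.
  have -> : x = (-1) *: (- x) by rewrite scaleN1r opprK.
  apply: (C_scale C Is hIs CE); last by rewrite oppr_eq0 oner_neq0.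
  apply: (he H t hH ht) => i; move: (hx i).
  rewrite scaleN1r mulmxN; set S := H *m dir t; rewrite !mxE => h.
  by move: h; rewrite -normrN opprD !opprK.
have hn2 := filterI hn (filterI (nbhs_right_gt (0:R)) (nbhs_right_le (@ltr01 R))).
have [e [he [e0 e1]]] := filter_ex (hn2 _ _).
have Phi0 : 0 < Phi by apply: (lt_le_trans ltr01 Phi1).
exists (e / (2 * Phi)); split.
- by rewrite divr_gt0 // mulr_gt0.
- rewrite ler_pdivrMr ?mulr_gt0 //; nra.
move=> H hH k hk x hx.
have k0 := C_neq0 C Is hIs CE hk.
have ek := eucl_gt0 _ k0.
have [I hI hIk] := (C_inv C Is CE k).1 hk.
set c := (eucl k)^-1.
have c0 : 0 < c by rewrite invr_gt0.
have qk : q (c *: k) = 1 by rewrite qZ -eucl_sq exprVn mulVf // expf_neq0 // lt0r_neq0.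
have Ik : I (c *: k).
  move: (hIs _ hI) hIk => [a [b [_ [_ IE]]]]; rewrite IE => hk'.
  by apply: pi_scale => //; rewrite lt0r_neq0.
have hq : q (c *: x - H *m (c *: k)) < e ^+ 2.
  rewrite -scalemxAr -scalerBr qZ.
  have h1 : c ^+ 2 * q (x - H *m k) <= c ^+ 2 * ((e / (2 * Phi)) ^+ 2 * q (H *m k)).
    by rewrite ler_wpM2l // sqr_ge0.
  have h2 : c ^+ 2 * q (H *m k) = q (H *m (c *: k)) by rewrite -scalemxAr qZ.
  have h3 : q (H *m (c *: k)) <= Phi.
    by apply: le_trans (q_mul_le H _) _; rewrite qk mulr1; exact: hPhi.
  have h4 : c ^+ 2 * ((e / (2 * Phi)) ^+ 2 * q (H *m k)) = (e / (2 * Phi)) ^+ 2 * q (H *m (c *: k)).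
    by rewrite -h2; ring.
  have h5 : (e / (2 * Phi)) ^+ 2 * Phi < e ^+ 2.
    have -> : (e / (2 * Phi)) ^+ 2 * Phi = e ^+ 2 / (4 * Phi).
      by field; apply/eqP => hP; move: Phi0; rewrite hP ltxx.
    rewrite ltr_pdivrMr ?mulr_gt0 //.
    have : 0 < e ^+ 2 by rewrite exprn_gt0.
    nra.
  have h6 : (e / (2 * Phi)) ^+ 2 * q (H *m (c *: k)) <= (e / (2 * Phi)) ^+ 2 * Phi.
    by rewrite ler_wpM2l // sqr_ge0.
  lra.
have hxk : forall i, `|(c *: x) i 0 - (H *m (c *: k)) i 0| < e.
  move=> i; have := entry_lt _ _ e0 hq i.
  by rewrite entryB.
have hC := he I hI H hH (c *: k) Ik qk (c *: x) hxk.
have := C_scale C Is hIs CE hC (lt0r_neq0 ek).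
by rewrite scalerA mulfV ?lt0r_neq0 // scale1r.
Qed.
Lemma q_tr (v : V) : q v = (v^T *m v) 0 0.
Proof. by rewrite mxE sum2 !mxE /q !expr2. Qed.

Lemma ortho_q (N : M2) (y : V) : orthogonal2 N -> q (N *m y) = q y.
Proof.
rewrite /orthogonal2 => hN.
by rewrite !q_tr trmx_mul mulmxA -(mulmxA _ N^T) hN mulmx1.
Qed.

Lemma conf_q (M A : M2) : M \in unitmx -> A \in unitmx ->
  orthogonal2 ((Num.sqrt `|\det A|)^-1 *: (M *m A *m invmx M)) ->
  forall w : V, q (M *m (A *m w)) = `|\det A| * q (M *m w).
Proof.
move=> hM hA hN w.
set r := Num.sqrt `|\det A|.
have r0 : r != 0.
  rewrite /r sqrtr_eq0 -ltNge normr_gt0 -unitfE -unitmxE //.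
have -> : M *m (A *m w) = (M *m A *m invmx M) *m (M *m w).
  by rewrite !mulmxA -(mulmxA _ (invmx M)) mulVmx // mulmx1.
have -> : M *m A *m invmx M = r *: ((r^-1) *: (M *m A *m invmx M)).
  by rewrite scalerA mulfV // scale1r.
rewrite -scalemxAl qZ ortho_q //.
by rewrite /r sqr_sqrtr // normr_ge0.
Qed.

Section Semigroup.
Variables (Ae Ah : set M2) (C : set V).

Definition AeW (E : M2) := E = 1%:M \/ gen_semigroup Ae E.

Lemma AeW_mul E1 E2 : AeW E1 -> AeW E2 -> AeW (E1 *m E2).
Proof.
move=> [->|h1] [->|h2].
- by left; rewrite mulmx1.
- by right; rewrite mul1mx.
- by right; rewrite mulmx1.
- by right; apply: gen_mul.
Qed.

Definition SS := gen_semigroup (Ae `|` Ah).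

Lemma decomp X : SS X -> AeW X \/
  exists P H E, [/\ P = 1%:M \/ SS P, Ah H, AeW E & X = P *m H *m E].
Proof.
elim=> [A [hA|hA] | A B hA IHA hB IHB].
- by left; right; apply: gen_base.
- right; exists 1%:M, A, 1%:M; split => //; first by left.
    by left.
  by rewrite mul1mx mulmx1.
- case: IHB => [wB|[P [H [E [hP hH hE ->]]]]].
    case: IHA => [wA|[P [H [E [hP hH hE ->]]]]].
      by left; apply: AeW_mul.
    right; exists P, H, (E *m B); split => //; first exact: AeW_mul.
    by rewrite !mulmxA.
  right; exists (A *m P), H, E; split => //; last by rewrite !mulmxA.
  right; case: hP => [->|hP]; first by rewrite mulmx1.
  exact: gen_mul.
Qed.

Hypothesis hAe : forall A, Ae A -> image_mx A C = C.
Hypothesis hAh : strongly_invariant C Ah.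

Lemma Ae_C A x : Ae A -> C x -> C (A *m x).
Proof. by move=> hA hx; rewrite -(hAe _ hA); exists x. Qed.

Lemma SS_C X : SS X -> forall x, C x -> C (X *m x).
Proof.
elim=> [A [hA|hA] | A B hA IHA hB IHB] x hx.
- exact: Ae_C.
- by apply: interior_subset; apply: (hAh _ hA); exists x.
- by rewrite -mulmxA; apply: IHA; apply: IHB.
Qed.

Lemma AeW_C E : AeW E -> forall x, C x -> C (E *m x).
Proof.
move=> [->|hE] x hx; first by rewrite mul1mx.
elim: hE x hx => [A hA|A B hA IHA hB IHB] x hx; first exact: Ae_C.
by rewrite -mulmxA; apply: IHA; apply: IHB.
Qed.
End Semigroup.

Lemma AeW_sim (Ae : set M2) (M : M2) :
  (forall A, Ae A -> forall w : V, q (M *m (A *m w)) = `|\det A| * q (M *m w)) ->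
  forall E, AeW Ae E -> exists g, 0 <= g /\ forall w : V, q (M *m (E *m w)) = g * q (M *m w).
Proof.
move=> hc E [->|hE]; first by exists 1; split => // w; rewrite mul1mx mul1r.
elim: hE => [A hA|A B hA [g1 [g10 IH1]] hB [g2 [g20 IH2]]].
  by exists `|\det A|; split => //; exact: hc.
exists (g1 * g2); split; first exact: mulr_ge0.
by move=> w; rewrite -mulmxA IH1 IH2 mulrA.
Qed.

Lemma AeW_ratio (M E : M2) g : M \in unitmx -> 0 <= g ->
  (forall w : V, q (M *m (E *m w)) = g * q (M *m w)) ->
  forall u v : V, (\det M ^+ 2) ^+ 2 * q (E *m u) * q v <= (F2 M) ^+ 4 * q (E *m v) * q u.
Proof.
move=> hM g0 hs u v.
set D := \det M ^+ 2; set F := F2 M.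
have D0 : 0 <= D by exact: sqr_ge0.
have F0 : 0 <= F by exact: F2_ge0.
have a1 := q_mul_ge M (E *m u).
have a2 := q_mul_le M u.
have b := q_mul_ge M v.
have c1 := q_mul_le M (E *m v).
rewrite hs in a1; rewrite hs in c1.
have qEu := q_ge0 (E *m u); have qv := q_ge0 v; have qu := q_ge0 u; have qEv := q_ge0 (E *m v).
have qMu := q_ge0 (M *m u); have qMv := q_ge0 (M *m v).
have a3 : D * q (E *m u) <= F * g * F * q u.
  apply: (le_trans a1); rewrite -!mulrA; apply: ler_wpM2l => //; apply: ler_wpM2l => //.
have step : D * q (E *m u) * (D * q v) <= (F * g * F * q u) * (F * q (M *m v)).
  by apply: ler_pM => //; apply: mulr_ge0.
have e1 : (F * g * F * q u) * (F * q (M *m v)) = F ^+ 3 * q u * (g * q (M *m v)).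
  by ring.
rewrite e1 in step.
have step2 : F ^+ 3 * q u * (g * q (M *m v)) <= F ^+ 3 * q u * (F * q (E *m v)).
  by apply: ler_wpM2l; [apply: mulr_ge0 => //; exact: exprn_ge0 | exact: c1].
have e2 : D ^+ 2 * q (E *m u) * q v = D * q (E *m u) * (D * q v) by ring.
have e3 : F ^+ 4 * q (E *m v) * q u = F ^+ 3 * q u * (F * q (E *m v)) by ring.
by rewrite e2 e3; apply: le_trans step step2.
Qed.
Lemma chain (XU XV W Z EU EV U Vv eps d0 gam Phi : R) :
  0 <= XU -> 0 <= XV -> 0 <= W -> 0 <= Z -> 0 <= EU -> 0 < EV -> 0 <= U -> 0 <= Vv ->
  0 < eps -> 0 < d0 -> 0 < gam -> 1 <= Phi ->
  eps ^+ 2 * XU * W <= XV * Z -> Z <= Phi * EU -> d0 * EV <= Phi * W ->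
  gam * EU * Vv <= EV * U ->
  eps ^+ 2 * d0 * gam / Phi ^+ 2 * XU * Vv <= XV * U.
Proof.
move=> hXU hXV hW hZ hEU hEV hU hVv he hd hg hP i1 i2 i3 i4.
have P0 : 0 < Phi by apply: (lt_le_trans ltr01 hP).
have e2 : 0 < eps ^+ 2 by rewrite exprn_gt0.
have s1 : eps ^+ 2 * XU * (d0 * EV) <= eps ^+ 2 * XU * (Phi * W).
  by apply: ler_wpM2l => //; rewrite mulr_ge0 // ltW.
have s2 : eps ^+ 2 * XU * (Phi * W) = Phi * (eps ^+ 2 * XU * W) by ring.
have s3 : Phi * (eps ^+ 2 * XU * W) <= Phi * (XV * Z) by rewrite ler_wpM2l // ltW.
have s4 : Phi * (XV * Z) <= Phi * (XV * (Phi * EU)) by rewrite ler_wpM2l ?ler_wpM2l // ltW.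
have st : eps ^+ 2 * d0 * XU * EV <= Phi ^+ 2 * XV * EU.
  have -> : eps ^+ 2 * d0 * XU * EV = eps ^+ 2 * XU * (d0 * EV) by ring.
  have -> : Phi ^+ 2 * XV * EU = Phi * (XV * (Phi * EU)) by ring.
  by apply: (le_trans s1); rewrite s2; apply: le_trans s3 s4.
have st2 : eps ^+ 2 * d0 * XU * EV * (gam * Vv) <= Phi ^+ 2 * XV * EU * (gam * Vv).
  by apply: ler_wpM2r => //; rewrite mulr_ge0 // ltW.
have st3 : Phi ^+ 2 * XV * (gam * EU * Vv) <= Phi ^+ 2 * XV * (EV * U).
  by apply: ler_wpM2l => //; rewrite mulr_ge0 // exprn_ge0 // ltW.
have fin : (eps ^+ 2 * d0 * gam * XU * Vv) * EV <= (Phi ^+ 2 * XV * U) * EV.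
  have -> : eps ^+ 2 * d0 * gam * XU * Vv * EV = eps ^+ 2 * d0 * XU * EV * (gam * Vv) by ring.
  have -> : Phi ^+ 2 * XV * U * EV = Phi ^+ 2 * XV * (EV * U) by ring.
  apply: (le_trans st2); apply: le_trans st3; rewrite le_eqVlt; apply/orP; left; apply/eqP; ring.
rewrite ler_pM2r // in fin.
have -> : eps ^+ 2 * d0 * gam / Phi ^+ 2 * XU * Vv = (eps ^+ 2 * d0 * gam * XU * Vv) / Phi ^+ 2.
  by field; apply/eqP => h0; move: P0; rewrite h0 ltxx.
rewrite ler_pdivrMr ?exprn_gt0 //.
by apply: (le_trans fin); rewrite le_eqVlt; apply/orP; left; apply/eqP; ring.
Qed.
End S.

Arguments q {R}.
Arguments cr {R}.
Arguments dt {R}.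
Arguments F2 {R}.
Arguments AeW {R}.
Arguments SS {R}.

Theorem proposition2p3 (R : realType) (Ae Ah : set 'M[R]_2) :
  (forall A, Ae A -> inGL2 A) ->
  (forall A, Ah A -> inGL2 A) ->
  Ah !=set0 ->
  compact Ah ->
  forall C : set 'cV[R]_2,
  multicone C ->
  strongly_invariant C Ah ->
  strongly_conformal Ae ->
  (forall A, Ae A -> image_mx A C = C) ->
  almost_multiplicative (gen_semigroup (Ae `|` Ah)).
Proof.
move=> hAeU hAhU hAhne hcpt C [[Is [hIs CE]] [Cne CnRP]] hsi [M [hM hconf]] hAeC.
have hq : forall A, Ae A -> forall w : 'cV[R]_2, q (M *m (A *m w)) = `|\det A| * q (M *m w).
  by move=> A hA; apply: conf_q => //; [exact: hAeU | exact: hconf].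
have [p0 [rho [hp0 r0 r1 hcomp]]] := complement _ C Is hIs CE CnRP.
have C0 : forall x, C x -> x != 0.
  move=> x hx. have := C_neq0 _ C Is hIs CE hx. by [].
have [Phi [d0 [Phi1 d00 d01 hb]]] := Ah_bounds _ Ah hAhne hcpt hAhU.
have [eta [et0 et1 hm]] := margin _ Ah C Is Phi hIs CE hcpt hsi Phi1 (fun H h => (hb H h).1).
set eps := eta * rho / 3.
have eps0 : 0 < eps by rewrite /eps divr_gt0 // mulr_gt0.
have eps1 : eps <= 1 by rewrite /eps ler_pdivrMr //; nra.
set D := \det M ^+ 2; set F := F2 M.
have detM : \det M != 0 by rewrite -unitfE -unitmxE.
have D0 : 0 < D by rewrite /D lt_neqAle sqr_ge0 andbT eq_sym sqrf_eq0.
have F0 : 0 < F.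
  have h := q_mul_ge _ M (e1 R).
  have qe : q (e1 R) = 1 by rewrite /q /e1 mkv0 mkv1 expr1n expr0n addr0.
  rewrite qe mulr1 in h.
  rewrite lt_neqAle F2_ge0 andbT eq_sym; apply/eqP => hF0.
  move: h; rewrite -/D -/F hF0 mul0r => h.
  by move: D0; rewrite ltNge h.
set gam := D ^+ 2 / F ^+ 4.
have gam0 : 0 < gam by rewrite /gam divr_gt0 // exprn_gt0.
have ratio : forall E, AeW Ae E -> forall u v : 'cV[R]_2, gam * q (E *m u) * q v <= q (E *m v) * q u.
  move=> E hE u v.
  have [g [g0 hs]] := AeW_sim _ Ae M hq E hE.
  have h := AeW_ratio _ M E g hM g0 hs u v.
  rewrite /gam -mulrA mulrAC ler_pdivrMr ?exprn_gt0 //.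
  by move: h; rewrite -/D -/F -mulrA => h; apply: (le_trans h); rewrite le_eqVlt; apply/orP; left; apply/eqP; ring.
set del := eps ^+ 2 * d0 * gam / Phi ^+ 2.
have Phi0 : 0 < Phi by apply: (lt_le_trans ltr01 Phi1).
have del0 : 0 < del.
  rewrite /del; apply: divr_gt0; last exact: exprn_gt0.
  by apply: mulr_gt0 => //; apply: mulr_gt0 => //; exact: exprn_gt0.
have delg : del <= gam.
  rewrite /del ler_pdivrMr ?exprn_gt0 //.
  have h1 : eps ^+ 2 <= 1 by nra.
  have h2 : 1 <= Phi ^+ 2 by nra.
  have a : eps ^+ 2 * d0 <= 1 by have := sqr_ge0 eps; nra.
  have b : eps ^+ 2 * d0 * gam <= gam by rewrite -[leRHS]mul1r ler_wpM2r // ltW.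
  have c : gam <= gam * Phi ^+ 2 by rewrite -[leLHS]mulr1 ler_wpM2l // ltW.
  exact: le_trans b c.
have claim : forall X, SS Ae Ah X -> forall v, C v -> forall u,
    del * q (X *m u) * q v <= q (X *m v) * q u.
  move=> X hX v hv u.
  case: (decomp _ Ae Ah X hX) => [wX | [P [H [E [hP hH hE ->]]]]].
    apply: le_trans (ratio X wX u v).
    by apply: ler_wpM2r; [exact: q_ge0 | apply: ler_wpM2r => //; exact: q_ge0].
  have hk := AeW_C _ Ae C hAeC E hE v hv.
  set k := E *m v in hk.
  have hPC : forall x, C x -> C (P *m x).
    case: hP => [-> x hx|hP]; first by rewrite mul1mx.
    exact: SS_C _ Ae Ah C hAeC hsi P hP.
  have hc := core _ C p0 rho eta P (H *m k) C0 hp0 r0 r1 hcomp hPC et0 et1 (hm H hH k hk) (H *m (E *m u)).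
  have eXu : P *m H *m E *m u = P *m (H *m (E *m u)) by rewrite !mulmxA.
  have eXv : P *m H *m E *m v = P *m (H *m k) by rewrite !mulmxA.
  rewrite eXu eXv.
  apply: (chain _ (q (P *m (H *m (E *m u)))) (q (P *m (H *m k))) (q (H *m k)) (q (H *m (E *m u)))
           (q (E *m u)) (q k) (q u) (q v) eps d0 gam Phi); rewrite ?q_ge0 //.
  - by apply: q_gt0; exact: C0.
  - apply: (le_trans (q_mul_le _ H _)); rewrite ler_wpM2r ?q_ge0 //; exact: (hb H hH).1.
  - apply: (le_trans _ (le_trans (q_mul_ge _ H k) _)).
      by rewrite ler_wpM2r ?q_ge0 //; exact: (hb H hH).2.
    by rewrite ler_wpM2r ?q_ge0 //; exact: (hb H hH).1.
  - exact: ratio.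
have [c hc] := Cne.
have ec := eucl_gt0 _ c (C0 c hc).
set v0 := (eucl c)^-1 *: c.
have hv0 : C v0 by apply: (C_scale _ C Is hIs CE) => //; rewrite invr_neq0 // lt0r_neq0.
have ev0 : eucl v0 = 1.
  by apply: q1_eucl; rewrite qZ -eucl_sq exprVn mulVf // expf_neq0 // lt0r_neq0.
exists del; split => // X Y hX hY.
have hlY := opnorm_lower _ Y v0 del del0 (C0 v0 hv0) (claim Y hY v0 hv0).
have hYv := SS_C _ Ae Ah C hAeC hsi Y hY v0 hv0.
have hlX := opnorm_lower _ X (Y *m v0) del del0 (C0 _ hYv) (claim X hX _ hYv).
have hub := opnorm_ub _ (X *m Y) v0 ev0.
rewrite ev0 mulr1 in hlY.
have sd := sqrtr_ge0 del.
have nX := opnorm_ge0 _ X.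
have nY := opnorm_ge0 _ Y.
have -> : del * opnorm X * opnorm Y = (Num.sqrt del * opnorm X) * (Num.sqrt del * opnorm Y).
  by rewrite mulrACA -expr2 sqr_sqrtr ?ltW // mulrA.
apply: le_trans hub; rewrite -mulmxA.
apply: le_trans hlX; apply: ler_wpM2l => //; exact: mulr_ge0.
Qed.
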